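(* Let $C_1, \ldots, C_m$ be the strongly connected components of the regulation graph $(A, \mathrm{reg})$, listed in a topological ordering of its strongly-connected-component quotient graph (i.e. whenever some agent of $C_i$ regulates some agent of $C_j$ with $i \neq j$, then $i < j$). Then $(C_1, \ldots, C_m)$ is a modular organisation.
   Context: Let $A$ be a finite set of agents. For each $a \in A$ let $S_a$ be a nonempty finite set, and let $S = \prod_{a \in A} S_a$ be the set of states; for $s \in S$ and $X \subseteq A$, $s|_X$ is the restriction of $s$ to $X$ (extended elementwise to sets). For each $a \in A$ let $\to_a \subseteq S \times S$ be a relation that is either empty or left-total, such that whenever $s \to_a s'$, either $s = s'$ or $s$ and $s'$ differ only in the $a$-component. For $X \subseteq A$ let $\to_X = \bigcup_{a \in X} \to_a$ (so $\to_\emptyset$ is empty) and $\to_X^*$ its reflexive-transitive closure; for $T \subseteq S$, $(T \to_X) = \{ t' : \exists t \in T,\ t \to_X t'\}$. Orbit operator: $\Omega_X(S') = \{ s' : \exists s \in S',\ s \to_X^* s'\}$. Equilibria operator: $\Psi_X(S') = \{ s \in \Omega_X(S') : \forall s' \in S,\ s \to_X^* s' \implies s' \to_X^* s \}$. $M$-relation: for $X, Y \subseteq A$, $X \leadsto Y$ iff for every $S' \subseteq S$, with $T = \Psi_X(\Psi_{X \cup Y}(S'))$, one has $(T \to_Y) \subseteq T$. Regulation: $a_k$ regulates $a_\ell$ (written $a_k \,\mathrm{reg}\, a_\ell$) iff there exist $s, s' \in S$ with $s|_{A \setminus \{a_k\}} = s'|_{A \setminus \{a_k\}}$ and $(\{s\}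 \to_{a_\ell})|_{\{a_\ell\}} \neq (\{s'\} \to_{a_\ell})|_{\{a_\ell\}}$; the regulation graph is the directed graph $(A, \mathrm{reg})$. A modular organisation is an ordered partition $(X_1, \ldots, X_m)$ of $A$ (a sequence of nonempty pairwise disjoint subsets with union $A$) such that for all $1 \le i \le m$, $\left(\bigcup_{j=1}^{i-1} X_j\right) \leadsto X_i$. *)

(* Defs.v *)
From mathcomp Require Import all_boot.
Set Implicit Arguments. Unset Strict Implicit. Unset Printing Implicit Defensive.

Section Defs.
Variables (A : finType) (S : A -> finType).

Definition state := {dffun forall a : A, S a}.

Variable step : forall a : A, rel state.

Definition empty_or_total (a : A) : Prop :=
  (forall s s', ~~ step a s s') \/ (forall s, exists s', step a s s').
Definition local_step (a : A) : Prop :=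
  forall s s', step a s s' -> s = s' \/ (forall b, b != a -> s b = s' b).

Definition stepX (X : {set A}) : rel state :=
  fun s t => [exists a in X, step a s t].
Definition reachX (X : {set A}) : rel state := connect (stepX X).

Definition Omega (X : {set A}) (S' : {set state}) : {set state} :=
  [set t | [exists s in S', reachX X s t]].

Definition Psi (X : {set A}) (S' : {set state}) : {set state} :=
  [set s in Omega X S' | [forall t, reachX X s t ==> reachX X t s]].

Definition Mrel (X Y : {set A}) : Prop :=
  forall S' : {set state},
    let T := Psi X (Psi (X :|: Y) S') in
    forall t t', t \in T -> stepX Y t t' -> t' \in T.

Definition succ_proj (l : A) (s : state) : {set S l} :=
  [set (t : state) l | t in [set t | step l s t]].

Definition reg (k l : A) : bool :=
  [exists s : state, exists s' : state,
     [forall b, (b != k) ==> (s b == s' b)] && (succ_proj l s != succ_proj l s')].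

Definition scc (x : A) : {set A} := [set y | connect reg x y && connect reg y x].
Definition is_scc (C : {set A}) : Prop := exists2 x, x \in C & C = scc x.

Definition prefix_union (Xs : seq {set A}) (i : nat) : {set A} :=
  \bigcup_(j < i) nth set0 Xs j.

Definition ordered_partition (Xs : seq {set A}) : Prop :=
  [/\ forall X, X \in Xs -> X != set0,
      forall i j, i < j < size Xs -> [disjoint nth set0 Xs i & nth set0 Xs j]
    & forall a : A, exists2 X, X \in Xs & a \in X].

Definition modular_organisation (Xs : seq {set A}) : Prop :=
  ordered_partition Xs /\
  forall i, i < size Xs -> Mrel (prefix_union Xs i) (nth set0 Xs i).

End Defs.

(* Main.v *)
Require Import Defs.
From mathcomp Require Import all_boot.
Set Implicit Arguments. Unset Strict Implicit. Unset Printing Implicit Defensive.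

Lemma connect_map (T : finType) (e : rel T) (P : T -> Prop) (f : T -> T) :
  (forall x y, P x -> e x y -> P y /\ e (f x) (f y)) ->
  forall x y, P x -> connect e x y -> P y /\ connect e (f x) (f y).
Proof.
move=> H x y Px /connectP [p Hp ->]; elim: p x Px Hp => [|z p IH] x Px /=.
  by move=> _; split=> //; exact: connect0.
case/andP=> exz Hp; have [Pz e'] := H _ _ Px exz.
have [Pl c] := IH z Pz Hp; split=> //.
exact: connect_trans (connect1 e') c.
Qed.

Lemma noreg_proj (A : finType) (S : A -> finType) (step : forall a : A, rel (state S))
  k l : ~~ reg step k l -> forall s s' : state S,
  (forall b, b != k -> s b = s' b) -> succ_proj step l s = succ_proj step l s'.
Proof.
move=> Hnr s s' Hb; apply/eqP.
move: Hnr => /existsPn /(_ s) /existsPn /(_ s'); rewrite negb_and => /orP [H|]; last first.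
  by rewrite negbK.
exfalso; move: H => /negP; apply; apply/forallP => b; apply/implyP => hb.
by rewrite Hb.
Qed.

Lemma proj_agree (A : finType) (S : A -> finType) (step : forall a : A, rel (state S))
  (X : {set A}) (Hcl : forall k l, l \in X -> reg step k l -> k \in X) l :
  l \in X -> forall n (s s' : state S), #|[set c | s c != s' c]| = n ->
  (forall c, c \in X -> s c = s' c) -> succ_proj step l s = succ_proj step l s'.
Proof.
move=> lX n; elim: n => [|n IH] s s' Hn Hag.
  have -> : s = s' => //; apply/ffunP => c.
  apply/eqP; apply: contraT => hc.
  suff : c \in [set c | s c != s' c] by rewrite (cards0_eq Hn) inE.
  by rewrite inE.
have : 0 < #|[set c | s c != s' c]| by rewrite Hn.
case/card_gt0P => b; rewrite inE => hb.
have bX : b \notin X by apply: contra hb => bX; rewrite Hag.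
pose s'' : state S := finfun (fun c => if c == b then s' c else s c).
have -> : succ_proj step l s = succ_proj step l s''.
  apply: noreg_proj.
    by apply: contra bX; apply: Hcl.
  by move=> c hc; rewrite ffunE (negbTE hc).
apply: IH; last by move=> c cX; rewrite ffunE; have [ecb|_] := eqVneq c b; [by rewrite -ecb cX in bX | exact: Hag].
have -> : [set c | s'' c != s' c] = [set c | s c != s' c] :\ b.
  apply/setP => c; rewrite !inE ffunE; have [->|] := eqVneq c b; first by rewrite eqxx.
  by [].
have := cardsD1 b [set c | s c != s' c]; rewrite inE hb Hn add1n.
by case.
Qed.

Lemma loc' (A : finType) (S : A -> finType) (step : forall a : A, rel (state S)) a :
  local_step step a -> forall s u, step a s u -> forall b, b != a -> s b = u b.
Proof. by move=> H s u /H [-> //|]. Qed.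

Definition gmap (A : finType) (S : A -> finType) (X : {set A}) (w u : state S) : state S :=
  finfun (fun c => if c \in X then u c else w c).

Lemma step_lift (A : finType) (S : A -> finType) (step : forall a : A, rel (state S))
  (Hloc : forall a, local_step step a)
  (X : {set A}) (Hcl : forall k l, l \in X -> reg step k l -> k \in X) w a s u :
  a \in X -> step a s u -> step a (gmap X w s) (gmap X w u).
Proof.
move=> aX hsu.
have Hsp : succ_proj step a (gmap X w s) = succ_proj step a s.
  apply: (@proj_agree _ _ step X Hcl a aX _ _ _ erefl).
  by move=> c cX; rewrite ffunE cX.
have : u a \in succ_proj step a s by apply/imsetP; exists u; rewrite ?inE.
rewrite -Hsp => /imsetP [v]; rewrite inE => hv eua.
suff -> : gmap X w u = v by [].
apply/ffunP => c; have [->|hca] := eqVneq c a.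
  by rewrite ffunE aX eua.
rewrite -(loc' (Hloc a) hv hca) !ffunE; case: ifP => // _.
exact: esym (loc' (Hloc a) hsu hca).
Qed.

Lemma equil_transfer (A : finType) (S : A -> finType) (step : forall a : A, rel (state S))
  (Hloc : forall a, local_step step a)
  (X : {set A}) (Hcl : forall k l, l \in X -> reg step k l -> k \in X) (t t' : state S) :
  (forall c, c \in X -> t c = t' c) ->
  (forall u, reachX step X t u -> reachX step X u t) ->
  forall u, reachX step X t' u -> reachX step X u t'.
Proof.
move=> Hag Heq.
have key : forall b w x y : state S, (forall c, c \notin X -> x c = b c) -> reachX step X x y ->
    (forall c, c \notin X -> y c = b c) /\ reachX step X (gmap X w x) (gmap X w y).
  move=> b w x y Px Hxy.
  apply: (@connect_map _ (stepX step X) (fun x : state S => forall c, c \notin X -> x c = b c) (gmap X w) _ x y Px Hxy).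
  move=> x1 y1 P1 /existsP [a /andP [aX hs]]; split.
    move=> c cX; rewrite -P1 //; apply/esym; apply: (loc' (Hloc a) hs).
    by apply: contraNneq cX => ->.
  by apply/existsP; exists a; rewrite aX; apply: step_lift.
move=> u Hu.
have [Pu H1] := key t' t t' u (fun _ _ => erefl) Hu.
have E1 : gmap X t t' = t by apply/ffunP => c; rewrite ffunE; case: ifP => // /Hag.
rewrite E1 in H1; have H2 := Heq _ H1.
have [_ H3] := key t t' (gmap X t u) t (fun c cX => ltac:(by rewrite ffunE (negbTE cX))) H2.
have E2 : gmap X t' (gmap X t u) = u.
  apply/ffunP => c; rewrite !ffunE; case: ifP => cX; rewrite ?cX //; by rewrite Pu ?cX.
have E3 : gmap X t' t = t'.
  by apply/ffunP => d; rewrite !ffunE; case: ifP => // /Hag.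
by rewrite E2 E3 in H3.
Qed.

Lemma psi_closed (A : finType) (S : A -> finType) (step : forall a : A, rel (state S))
  Z (S' : {set state S}) p t :
  p \in Psi step Z S' -> reachX step Z p t -> t \in Psi step Z S'.
Proof.
rewrite !inE => /andP [/existsP [s0 /andP [s0S r0]] /forallP Heq] rpt.
apply/andP; split.
  apply/existsP; exists s0; rewrite s0S /=; exact: (connect_trans r0 rpt).
apply/forallP => u; apply/implyP => rtu.
have := Heq u; rewrite /reachX (connect_trans rpt rtu) /= => rup.
exact: connect_trans rup rpt.
Qed.

Lemma reach_sub (A : finType) (S : A -> finType) (step : forall a : A, rel (state S))
  (X Z : {set A}) : X \subset Z -> forall x y, reachX step X x y -> reachX step Z x y.
Proof.
move=> sXZ; apply: connect_sub => x y /existsP [a /andP [aX h]].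
by apply: connect1; apply/existsP; exists a; rewrite (subsetP sXZ _ aX).
Qed.

Lemma mrel_closed (A : finType) (S : A -> finType) (step : forall a : A, rel (state S))
  (Hloc : forall a, local_step step a)
  (X Y : {set A}) (Hcl : forall k l, l \in X -> reg step k l -> k \in X)
  (Hdis : forall a, a \in Y -> a \notin X) : Mrel step X Y.
Proof.
move=> S' /= t t' tT /existsP [a /andP [aY hs]].
set P := Psi step (X :|: Y) S'.
have tP : t \in P.
  move: tT; rewrite inE => /andP [H _]; move: H; rewrite inE.
  move=> /existsP [p /andP [pP rpt]].
  apply: (psi_closed pP); apply: (reach_sub (X := X)) rpt; exact: subsetUl.
have t'P : t' \in P.
  apply: (psi_closed tP); apply: connect1; apply/existsP; exists a.
  by rewrite inE aY orbT.
rewrite inE; apply/andP; split.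
  by rewrite inE; apply/existsP; exists t'; rewrite t'P; exact: connect0.
move: tT; rewrite inE => /andP [_ /forallP Heq].
apply/forallP => u; apply/implyP; apply: (equil_transfer Hloc Hcl (t := t)).
  move=> c cX; apply: (loc' (Hloc a) hs); apply: contraNneq (Hdis a aY) => <-.
  exact: cX.
by move=> v; move/implyP: (Heq v).
Qed.

Lemma scc_sub (A : finType) (S : A -> finType) (step : forall a : A, rel (state S)) x z :
  z \in scc step x -> scc step z = scc step x.
Proof.
rewrite inE => /andP [xz zx]; apply/setP => y; rewrite !inE.
apply/andP/andP => [[zy yz]|[xy yx]]; split.
- exact: connect_trans xz zy.
- exact: connect_trans yz zx.
- exact: connect_trans zx xy.
- exact: connect_trans yx xz.
Qed.

Lemma scc_self (A : finType) (S : A -> finType) (step : forall a : A, rel (state S)) x :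
  x \in scc step x.
Proof. by rewrite inE connect0. Qed.

Theorem theorem1 (A : finType) (S : A -> finType)
  (step : forall a : A, rel (state S))
  (HS : forall a, 0 < #|S a|)
  (Hstep1 : forall a, empty_or_total step a)
  (Hstep2 : forall a, local_step step a)
  (Cs : seq {set A})
  (Huniq : uniq Cs)
  (Hscc : forall C, C \in Cs -> is_scc step C)
  (Hcover : forall x : A, scc step x \in Cs)
  (Htopo : forall i j k l, i < size Cs -> j < size Cs ->
      k \in nth set0 Cs i -> l \in nth set0 Cs j ->
      reg step k l -> i != j -> i < j) :
  modular_organisation step Cs.
Proof.
have Hdisj : forall i j, i < j < size Cs -> [disjoint nth set0 Cs i & nth set0 Cs j].
  move=> i j /andP [ij js]; have is_ : i < size Cs by apply: ltn_trans ij js.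
  apply/pred0P => z /=; apply/negbTE/negP => /andP [zi zj].
  have [x _ Ex] := Hscc _ (mem_nth set0 is_).
  have [y _ Ey] := Hscc _ (mem_nth set0 js).
  have : nth set0 Cs i = nth set0 Cs j.
    have E1 : scc step z = scc step x by apply: scc_sub; rewrite -Ex.
    have E2 : scc step z = scc step y by apply: scc_sub; rewrite -Ey.
    by rewrite Ex Ey -E1 -E2.
  by move/eqP; rewrite nth_uniq // (ltn_eqF ij).
split; first split.
- move=> X /Hscc [x xX _]; by apply/set0Pn; exists x.
- exact: Hdisj.
- by move=> a; exists (scc step a); [exact: Hcover | exact: scc_self].
move=> i isz; apply: mrel_closed => //.
- move=> k l /bigcupP [j _ lj] rkl.
  have js : j < size Cs by apply: ltn_trans isz.
  set m := index (scc step k) Cs.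
  have ms : m < size Cs by rewrite index_mem.
  have km : k \in nth set0 Cs m by rewrite nth_index ?scc_self.
  have mi : m < i.
    have [emj|nmj] := eqVneq m j; first by rewrite emj.
    exact: ltn_trans (Htopo _ _ _ _ ms js km lj rkl nmj) (ltn_ord j).
  by apply/bigcupP; exists (Ordinal mi).
- move=> a ai; apply/negP => /bigcupP [j _ aj].
  have := Hdisj j i; rewrite (ltn_ord j) isz => /(_ isT) /pred0P /(_ a) /=.
  by rewrite aj ai.
Qed.
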